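(* Let $r\ge2$ and let $\lambda$ be a partition of length $r$ with degree sequence $(n_1,n_2,\dots,n_r)$ (increasing). Let $\mu_1$ be the partition with degree sequence $(n_1,\dots,n_{r-1})$ and $\mu_2$ the partition with degree sequence $(n_1,\dots,n_{r-2},n_r)$. If $R_{\mu_1}(x)$ is irreducible (non-constant and irreducible over $\mathbb{Q}$) and $R_{\mu_1}(x)$ divides $R_\lambda(x)$, then $R_{\mu_1}(x)$ divides $R_{\mu_2}(x)$.
   Context: $\mathrm{He}_k(x)$ denotes the monic probabilists' Hermite polynomial of degree $k$. A partition $\lambda=(\lambda_1\ge\dots\ge\lambda_r\ge0)$ may have zero parts; its degree sequence is $n_\lambda=(\lambda_r,\lambda_{r-1}+1,\dots,\lambda_1+r-1)$, and any set of $r$ distinct non-negative integers is the degree sequence of exactly one partition of length $r$. $\mathrm{He}_\lambda=\mathrm{Wr}[\mathrm{He}_{n_1},\dots,\mathrm{He}_{n_r}]/\prod_{i<j}(n_j-n_i)$. Removing a $2$-hook means replacing an entry $a$ of $n_\lambda$ by $a-2\ge0$ with $a-2\notin n_\lambda$; removing $2$-hooks until impossible yields the $2$-core $\bar\lambda$, and $\mathrm{He}_\lambda(x)=x^{|\bar\lambda|}R_\lambda(x)$ with $R_\lambda\in\mathbb{Z}[x]$, $R_\lambda(0)\ne0$. *)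

(* Defs.v *)
From HB Require Import structures.
From mathcomp Require Import all_boot all_order all_algebra.
Set Implicit Arguments. Unset Strict Implicit. Unset Printing Implicit Defensive.
Import GRing.Theory.
Local Open Scope ring_scope.

(* Probabilists' Hermite polynomials over Q:
   He_0 = 1, He_1 = x, He_{k+2} = x He_{k+1} - (k+1) He_k. *)
Fixpoint hermite_pair (k : nat) : {poly rat} * {poly rat} :=
  match k with
  | 0%N => (1, 'X)
  | k'.+1 => let: (a, b) := hermite_pair k' in (b, 'X * b - (k'.+1)%:R *: a)
  end.

Definition He (k : nat) : {poly rat} := (hermite_pair k).1.

Definition wronskian (fs : seq {poly rat}) : {poly rat} :=
  \det (\matrix_(i < size fs, j < size fs) (nth 0 fs j)^`(i)).

(* He_lambda for the partition lambda given by its degree sequence ns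
   (an increasing sequence n_1 < ... < n_r of non-negative integers). *)
Definition He_part (ns : seq nat) : {poly rat} :=
  (\prod_(i < size ns) \prod_(j < size ns | (i < j)%N)
      ((nth 0%N ns j)%:R - (nth 0%N ns i)%:R))^-1
  *: wronskian (map He ns).

Definition R_part (ns : seq nat) : {poly rat} :=
  He_part ns %/ 'X ^+ (mup 0 (He_part ns)).

(* Main.v *)
Require Import Defs.
From HB Require Import structures.
From mathcomp Require Import all_boot all_order all_algebra fingroup perm.
Set Implicit Arguments. Unset Strict Implicit. Unset Printing Implicit Defensive.
Import GRing.Theory.
Local Open Scope ring_scope.

From mathcomp Require Import zify.
Import Num.Theory.
Section Jac.
Variable R : comNzRingType.

Lemma det_rev m (A B : 'M[R]_m) :
  (forall i j, A i j = B (rev_ord i) (rev_ord j)) -> \det A = \det B.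
Proof.
move=> AB; pose s := perm (@rev_ord_inj m).
have -> : A = row_perm s (col_perm s B).
  by apply/matrixP=> i j; rewrite !mxE !permE AB.
rewrite row_permE col_permE !det_mulmx !det_perm odd_permV.
by rewrite mulrCA -signr_addb addbb expr0 mulr1.
Qed.

Lemma det_mx22 (A : 'M[R]_2) : \det A = A 0 0 * A 1 1 - A 0 1 * A 1 0.
Proof.
rewrite (expand_det_row _ 0) !big_ord_recl big_ord0 addr0 /cofactor /=.
rewrite !det_mx11 !mxE /=.
have l1 : lift ord0 (0 : 'I_1) = 1 :> 'I_2 by apply/val_inj.
have l0 : lift 1 (0 : 'I_1) = 0 :> 'I_2 by apply/val_inj.
rewrite l1 /bump /= expr0 expr1 mul1r mulN1r mulrN.
by rewrite ?l0 ?l1.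
Qed.

Lemma jacobi_aux n (M : 'M[R]_(2 + n)) :
  \det M * (cofactor M 0 0 * cofactor M 1 1 - cofactor M 1 0 * cofactor M 0 1)
  = \det M * (\det M * \det (drsubmx M)).
Proof.
pose Ad := \adj M.
pose B := block_mx (ulsubmx Ad) 0 (dlsubmx Ad) 1%:M.
have dB : \det B = cofactor M 0 0 * cofactor M 1 1 - cofactor M 1 0 * cofactor M 0 1.
  rewrite det_lblock det1 mulr1 det_mx22 !mxE.
  have e0 : lshift n (0:'I_2) = 0 by apply/val_inj.
  have e1 : lshift n (1:'I_2) = 1 by apply/val_inj.
  by rewrite e0 e1.
have MB : M *m B = block_mx (\det M)%:M (ursubmx M) 0 (drsubmx M).
  have := mul_mx_adj M; rewrite -/Ad -[M in M *m _]submxK -[Ad]submxK.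
  rewrite mulmx_block scalar_mx_block => /eq_block_mx [e1 _ e3 _].
  rewrite -[M in M *m _]submxK /B mulmx_block !mulmx0 !mulmx1 ?add0r ?addr0.
  by rewrite e1 e3.
have := det_mulmx M B; rewrite MB det_ublock det_scalar dB.
by move=> <-; rewrite expr2 mulrA.
Qed.
End Jac.

Lemma jacobi (R : idomainType) n (M : 'M[R]_(2 + n)) :
  \det M * \det (drsubmx M) =
  cofactor M 0 0 * cofactor M 1 1 - cofactor M 1 0 * cofactor M 0 1.
Proof.
have gen : forall (S : idomainType) (N : 'M[S]_(2 + n)), \det N != 0 ->
    \det N * \det (drsubmx N) =
    cofactor N 0 0 * cofactor N 1 1 - cofactor N 1 0 * cofactor N 0 1.
  by move=> S N /mulfI H; apply: H; rewrite jacobi_aux.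
pose N := char_poly_mx (- M).
have hM : map_mx (horner_eval 0) N = M.
  apply/matrixP=> i j; rewrite !mxE /horner_eval !hornerE.
  by case: (i == j); rewrite /= ?hornerE ?opprK.
rewrite -hM -map_drsubmx !det_map_mx !cofactor_map_mx -!rmorphM -rmorphB.
by rewrite (gen _ N (monic_neq0 (char_poly_monic (- M)))).
Qed.
Section Der.
Variable R : comNzRingType.

Lemma deriv_prod m (F : 'I_m -> {poly R}) :
  (\prod_(i < m) F i)^`() =
  \sum_(k < m) \prod_(i < m) (if i == k then (F i)^`() else F i).
Proof.
elim: m F => [|m IH] F; first by rewrite !big_ord0 -polyC1 derivC.
rewrite big_ord_recr /= derivM IH big_distrl /= big_ord_recr /=.
congr (_ + _).
  apply: eq_bigr => k _; rewrite big_ord_recr /=.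
  have -> : (ord_max == widen_ord (leqnSn m) k) = false.
    by apply/negbTE; rewrite neq_ltn /= ltn_ord orbT.
  congr (_ * _); apply: eq_bigr => i _.
rewrite big_ord_recr /= eqxx; congr (_ * _); apply: eq_bigr => i _.
have -> : (widen_ord (leqnSn m) i == ord_max) = false.
  by apply/negbTE; rewrite neq_ltn /= ltn_ord.
by [].
Qed.

Lemma deriv_det m (A : 'M[{poly R}]_m) :
  (\det A)^`() =
  \sum_(k < m) \det (\matrix_(i, j) if i == k then (A i j)^`() else A i j).
Proof.
rewrite /determinant (@raddf_sum _ _ (@deriv R)) exchange_big /=.
apply: eq_bigr => s _.
rewrite -[RHS]big_distrr /=.
have -> : ((-1) ^+ s : {poly R}) = ((-1) ^+ s)%:P by rewrite rmorph_sign.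
rewrite deriv_mulC deriv_prod; congr (_ * _); apply: eq_bigr => k _.
by apply: eq_bigr => i _; rewrite mxE.
Qed.

Lemma deriv_wr (L : seq {poly R}) m :
  (\det (\matrix_(i < m.+1, j < m.+1) (nth 0 L j)^`(i)))^`() =
  \det (\matrix_(i < m.+1, j < m.+1) (nth 0 L j)^`(if i == m :> nat then m.+1 else i)).
Proof.
rewrite deriv_det big_ord_recr /= big1 ?add0r.
  congr (\det _); apply/matrixP=> i j; rewrite !mxE.
  case: (altP (i =P ord_max)) => [->|ne]; first by rewrite eqxx derivnS.
  have -> : (i == m :> nat) = false.
    by apply/negbTE; apply: contra ne => /eqP e; apply/eqP/val_inj.
  by [].
move=> k _; apply: (@determinant_alternate _ _ _ (widen_ord (leqnSn m) k) (lift ord0 k)).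
  by rewrite neq_ltn /= ltnSn.
move=> j; rewrite !mxE eqxx /=.
have -> : (lift ord0 k == widen_ord (leqnSn m) k) = false.
  by apply/negbTE; rewrite neq_ltn /= ltnSn orbT.
by rewrite add0n.
Qed.
End Der.

Definition Wr (L : seq {poly rat}) m (rho : nat -> nat) : 'M[{poly rat}]_m :=
  \matrix_(i < m, j < m) (nth 0 L j)^`(rho i).

Section WId.
Variables (F : seq {poly rat}) (a b : {poly rat}).
Let n := size F.
Let L := F ++ [:: a; b].

Lemma nthLF k : (k < n)%N -> nth 0 L k = nth 0 F k.
Proof. by move=> h; rewrite nth_cat h. Qed.
Lemma nthLa k : (k <= n)%N -> nth 0 L k = nth 0 (F ++ [:: a]) k.
Proof.
move=> h; rewrite !nth_cat; case: ltnP => // h2.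
by have -> : (k - size F = 0)%N by rewrite /n in h; lia.
Qed.
Lemma nthLb k : (k < n)%N -> nth 0 L k = nth 0 (F ++ [:: b]) k.
Proof. by move=> h; rewrite !nth_cat h. Qed.
Lemma nthLb' : nth 0 L n.+1 = nth 0 (F ++ [:: b]) n.
Proof. by rewrite !nth_cat /n ltnn ltnNge leqnSn /= subSn // subnn. Qed.

Let M : 'M_(2 + n) := \matrix_(i, j) (nth 0 L (n.+1 - j))^`(n.+1 - i).

Lemma dM : \det M = \det (Wr L n.+2 id).
Proof. by apply: det_rev => i j; rewrite !mxE. Qed.

Lemma dC : \det (drsubmx M) = \det (Wr F n id).
Proof.
apply: det_rev => i j; rewrite !mxE /=.
have hi := ltn_ord i; have hj := ltn_ord j.
rewrite nthLF; last lia.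
have -> : (n.+1 - (2 + j) = n - j.+1)%N by lia.
by have -> : (n.+1 - (2 + i) = n - i.+1)%N by lia.
Qed.

Lemma c00 : cofactor M 0 0 = \det (Wr (F ++ [:: a]) n.+1 id).
Proof.
rewrite /cofactor /= expr0 mul1r.
apply: det_rev => i j; rewrite !mxE /=.
have hi := ltn_ord i; have hj := ltn_ord j.
rewrite /bump !leq0n /= nthLa; last lia.
by [].
Qed.
Lemma c11 : cofactor M 1 1 =
  \det (Wr (F ++ [:: b]) n.+1 (fun i => if i == n then n.+1 else i)).
Proof.
rewrite /cofactor /= modn_small // expr2 mulrNN !mul1r.
apply: det_rev => i j; rewrite !mxE /= modn_small //.
apply: (congr2 (fun p k => p^`(k))).
  case: j => [[|j] hj]; rewrite /bump /=.
    by rewrite subn0 nthLb'; congr nth; lia.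
  by rewrite nthLb; [congr nth; lia | lia].
case: i => [[|i] hi]; rewrite /bump /=; case: eqP; lia.
Qed.

Lemma c01 : cofactor M 0 1 = - \det (Wr (F ++ [:: b]) n.+1 id).
Proof.
rewrite /cofactor /= modn_small // expr1 mulN1r; congr (- _).
apply: det_rev => i j; rewrite !mxE /= modn_small //.
apply: (congr2 (fun p k => p^`(k))).
  case: j => [[|j] hj]; rewrite /bump /=.
    by rewrite subn0 nthLb'; congr nth; lia.
  by rewrite nthLb; [congr nth; lia | lia].
case: i => [i hi]; rewrite /bump /=; lia.
Qed.
Lemma c10 : cofactor M 1 0 =
  - \det (Wr (F ++ [:: a]) n.+1 (fun i => if i == n then n.+1 else i)).
Proof.
rewrite /cofactor /= modn_small // expr1 mulN1r; congr (- _).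
apply: det_rev => i j; rewrite !mxE /= modn_small //.
apply: (congr2 (fun p k => p^`(k))).
  case: j => [j hj]; rewrite /bump /=.
  by rewrite nthLa; [congr nth; lia | lia].
case: i => [[|i] hi]; rewrite /bump /=; case: eqP; lia.
Qed.

Lemma wr_id :
  \det (Wr L n.+2 id) * \det (Wr F n id) =
  \det (Wr (F ++ [:: a]) n.+1 id) * (\det (Wr (F ++ [:: b]) n.+1 id))^`() -
  \det (Wr (F ++ [:: b]) n.+1 id) * (\det (Wr (F ++ [:: a]) n.+1 id))^`().
Proof.
rewrite -dM -dC jacobi c00 c11 c01 c10 /Wr !deriv_wr.
by rewrite mulrNN [X in _ - X]mulrC.
Qed.
End WId.

Definition Rp (p : {poly rat}) := p %/ 'X ^+ (mup 0 p).

Lemma Rp1 p : p = Rp p * 'X ^+ (mup 0 p).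
Proof.
have [->|p0] := eqVneq p 0; first by rewrite /Rp div0p mul0r.
rewrite /Rp divpK //.
have := leqnn (mup 0 p); rewrite mup_geq //.
by rewrite polyC0 subr0.
Qed.

Lemma Rp2 p : p != 0 -> ~~ ('X %| Rp p).
Proof.
move=> p0; apply/negP => hX.
have := leqnn (mup 0 p); rewrite mup_leq // polyC0 subr0 => /negP; apply.
rewrite {2}(Rp1 p) exprSr mulrC; exact: dvdp_mul.
Qed.

Lemma irr_coprime (P q : {poly rat}) :
  irreducible_poly P -> ~~ (P %| q) -> coprimep P q.
Proof.
move=> hP nPq; rewrite coprimep_def; apply/negPn/negP => hs.
have := hP.2 _ hs (dvdp_gcdl P q) => /eqp_dvdl h.
by move: (dvdp_gcdr P q); rewrite h (negbTE nPq).
Qed.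

Lemma deriv_neq0 (P : {poly rat}) : (1 < size P)%N -> P^`() != 0.
Proof.
move=> hs; apply/eqP => h; have := congr1 (fun q : {poly rat} => q`_(size P).-2) h.
rewrite /= coef_deriv coef0 => /eqP; rewrite mulrn_eq0.
have -> : (size P).-2.+1 = (size P).-1 by lia.
apply/negP; rewrite negb_or; apply/andP; split; first by apply/eqP; lia.
have := lead_coef_eq0 P; rewrite /lead_coef => ->.
by rewrite -size_poly_eq0; apply/eqP; lia.
Qed.

Lemma key (W1 W2 Wl Wn : {poly rat}) (k1 k2 kl : rat) :
  Wl * Wn = W1 * W2^`() - W2 * W1^`() -> kl != 0 ->
  irreducible_poly (Rp (k1 *: W1)) -> Rp (k1 *: W1) %| Rp (kl *: Wl) ->
  Rp (k1 *: W1) %| Rp (k2 *: W2).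
Proof.
move=> hid kl0 hirr hdiv.
set P := Rp (k1 *: W1) in hirr hdiv *.
have P0 : P != 0 := irredp_neq0 hirr.
have H10 : k1 *: W1 != 0 by apply: contra P0 => /eqP e; rewrite /P e /Rp div0p.
have k10 : k1 != 0 by apply: contra H10 => /eqP ->; rewrite scale0r.
have PH1 : P %| k1 *: W1 by rewrite [X in _ %| X](Rp1 (k1 *: W1)); apply: dvdp_mulr.
have PW1 : P %| W1 by rewrite -(dvdpZr _ _ k10).
have PWl : P %| Wl.
  rewrite -(dvdpZr _ _ kl0); apply: dvdp_trans hdiv _.
  by rewrite [X in _ %| X](Rp1 (kl *: Wl)); apply: dvdp_mulr.
have cX : forall m, coprimep P ('X ^+ m).
  move=> m; apply: coprimep_expr; rewrite coprimepX -dvdp_XsubCl polyC0 subr0.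
  exact: Rp2.
have nPW1' : ~~ (P %| W1^`()).
  apply/negP => h.
  have : P %| (k1 *: W1)^`() by rewrite derivZ dvdpZr.
  rewrite {1}(Rp1 (k1 *: W1)) derivM -/P dvdp_addl; last by rewrite dvdp_mulr.
  rewrite Gauss_dvdpl // => hP'.
  have := dvdp_leq (deriv_neq0 hirr.1) hP'.
  by rewrite leqNgt lt_size_deriv.
have PW2 : P %| W2.
  have h : P %| W2 * W1^`().
    have e : W2 * W1^`() = W1 * W2^`() - Wl * Wn by rewrite hid opprB addrC subrK.
    by rewrite e dvdp_sub ?dvdp_mulr.
  by rewrite Gauss_dvdpl ?irr_coprime in h.
have [->|k20] := eqVneq k2 0; first by rewrite scale0r /Rp div0p dvdp0.
have : P %| k2 *: W2 by rewrite dvdpZr.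
by rewrite {1}(Rp1 (k2 *: W2)) Gauss_dvdpl.
Qed.

Lemma wronskianE fs m : size fs = m -> wronskian fs = \det (Wr fs m id).
Proof. by move=> <-. Qed.

Lemma prod_neq0 (ns : seq nat) : sorted ltn ns ->
  \prod_(i < size ns) \prod_(j < size ns | (i < j)%N)
      ((nth 0%N ns j)%:R - (nth 0%N ns i)%:R : rat) != 0.
Proof.
move=> hs; apply: (big_ind (fun x : rat => x != 0)) => //; first exact: mulf_neq0.
move=> i _; apply: (big_ind (fun x : rat => x != 0)) => //; first exact: mulf_neq0.
move=> j hij; rewrite subr_eq0 eqr_nat gtn_eqF //.
by apply: (sorted_ltn_nth ltn_trans) => //; rewrite inE ltn_ord.
Qed.

Theorem mainTheorem19 (r : nat) (ns : seq nat) :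
  (2 <= r)%N -> size ns = r -> sorted ltn ns ->
  let mu1 := take r.-1 ns in
  let mu2 := take r.-2 ns ++ [:: last 0%N ns] in
  irreducible_poly (R_part mu1) ->
  R_part mu1 %| R_part ns ->
  R_part mu1 %| R_part mu2.
Proof.
move=> hr hs hsort mu1 mu2 hirr hdiv.
have [s [x [y ens]]] : exists s x y, ns = s ++ [:: x; y].
  exists (take r.-2 ns).
  have := size_drop r.-2 ns; rewrite hs.
  case e: (drop r.-2 ns) => [|x [|y [|z t]]] /= h; try lia.
  by exists x, y; rewrite -e cat_take_drop.
subst ns; have er : r = (size s).+2 by move: hs; rewrite size_cat /=; lia.
subst r.
have e1 : mu1 = s ++ [:: x].
  by rewrite /mu1 er /= take_cat ltnNge leqnSn /= subSnn.
have e2 : mu2 = s ++ [:: y] by rewrite /mu2 er /= take_size_cat // last_cat.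
rewrite e1 in hirr hdiv *; rewrite e2.
rewrite /R_part /He_part -!/(Rp _) in hirr hdiv *.
move: hirr hdiv; apply: (key (Wn := wronskian (map He s))).
  2: by rewrite invr_neq0 // prod_neq0.
rewrite !map_cat /=.
have hF := size_map He s.
rewrite (wronskianE (m := (size (map He s)).+2) (fs := map He s ++ [:: He x; He y]));
  last by rewrite size_cat /= addn2.
rewrite (wronskianE (m := (size (map He s))) (fs := map He s)) //.
rewrite (wronskianE (m := (size (map He s)).+1) (fs := map He s ++ [:: He x]));
  last by rewrite size_cat /= addn1.
rewrite (wronskianE (m := (size (map He s)).+1) (fs := map He s ++ [:: He y]));
  last by rewrite size_cat /= addn1.
exact: wr_id.
Qed.
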